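(* Let $\mathcal{P}=(P_1,\ldots,P_r)$ be an $r$-tuple of pairwise disjoint finite subsets of $\mathbb{R}^d$. Then: (i) $0\in\operatorname{aff}(\Phi(\mathcal{P}))$ if and only if $\bigcap_{i=1}^r\operatorname{aff}(P_i)\neq\emptyset$ ($\mathcal{P}$ has an affine Tverberg point); (ii) the set $\Phi(\mathcal{P})$ is affinely dependent if and only if at least one of the sets $P_i$ is affinely dependent or $\bigcap_{i=1}^r\operatorname{linaff}(P_i)\neq\{0\}$ ($\mathcal{P}$ has a Tverberg direction).
   Context: Let $N=(d+1)(r-1)$, $w_1,\ldots,w_r\in\mathbb{R}^{r-1}$ the vertices of a regular $(r-1)$-simplex centered at the origin, $x^+=(x,1)\in\mathbb{R}^{d+1}$ for $x\in\mathbb{R}^d$, and $u\otimes v=(u_1v_1,\ldots,u_1v_n,u_2v_1,\ldots,u_mv_n)$ the tensor product. The $i$th clone of $x$ is $\varphi_i(x)=x^+\otimes w_i\in\mathbb{R}^N$, and $\Phi(\mathcal{P})=\bigcup_{i=1}^r\{\varphi_i(p):p\in P_i\}$. $\operatorname{aff}(X)$ is the affine hull of $X$; $\operatorname{linaff}(X)$ is its translate through the origin, i.e., the set of all linear combinations $\sum\beta_ix_i$ with $x_i\in X$ and $\sum\beta_i=0$. *)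

(* Defs.v *)
From HB Require Import structures.
From mathcomp Require Import all_boot all_order all_algebra.
Set Implicit Arguments. Unset Strict Implicit. Unset Printing Implicit Defensive.
Import Order.TTheory GRing.Theory Num.Theory.
Local Open Scope ring_scope.

Section Affine.
Variables (R : realFieldType) (n : nat).
Local Notation V := 'rV[R]_n.

(* Finite subsets of R^n are represented by sequences; all notions below
   depend only on the underlying set (we work on [undup s]). *)

Definition in_aff (s : seq V) (x : V) : Prop :=
  exists c : V -> R, \sum_(p <- undup s) c p = 1 /\ x = \sum_(p <- undup s) c p *: p.

Definition in_linaff (s : seq V) (x : V) : Prop :=
  exists c : V -> R, \sum_(p <- undup s) c p = 0 /\ x = \sum_(p <- undup s) c p *: p.

Definition aff_dep (s : seq V) : Prop :=
  exists c : V -> R, [/\ \sum_(p <- undup s) c p = 0,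
                         \sum_(p <- undup s) c p *: p = 0 &
                         exists2 p, p \in s & c p != 0].

Definition sqnorm (v : V) : R := \sum_(k < n) (v 0 k) ^+ 2.
End Affine.

(* tensor product u (x) v = (u1v1,..,u1vn,u2v1,..,umvn) *)
Definition tensor (R : realFieldType) (m n : nat) (u : 'rV[R]_m) (v : 'rV[R]_n)
  : 'rV[R]_(m * n) := mxvec (u^T *m v).

Definition lift1 (R : realFieldType) (d : nat) (x : 'rV[R]_d) : 'rV[R]_(d + 1) :=
  row_mx x (const_mx 1).

Definition regular_simplex_centered (R : realFieldType) (r : nat)
  (w : 'I_r -> 'rV[R]_(r - 1)) : Prop :=
  \sum_(i < r) w i = 0 /\
  exists2 c : R, 0 < c & forall i j : 'I_r, i != j -> sqnorm (w i - w j) = c.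

Definition clone (R : realFieldType) (d r : nat) (w : 'I_r -> 'rV[R]_(r - 1))
  (i : 'I_r) (x : 'rV[R]_d) : 'rV[R]_((d + 1) * (r - 1)) :=
  tensor (lift1 x) (w i).

Definition Phi (R : realFieldType) (d r : nat) (w : 'I_r -> 'rV[R]_(r - 1))
  (P : 'I_r -> seq 'rV[R]_d) : seq 'rV[R]_((d + 1) * (r - 1)) :=
  flatten [seq map (clone w i) (P i) | i <- enum 'I_r].

(* Main.v *)
Require Import Defs.
From HB Require Import structures.
From mathcomp Require Import all_boot all_order all_algebra.
From Stdlib Require Import ClassicalEpsilon.
Set Implicit Arguments. Unset Strict Implicit. Unset Printing Implicit Defensive.
Import Order.TTheory GRing.Theory Num.Theory.
Local Open Scope ring_scope.

Lemma sum_prod (R : realFieldType) (I : finType) (f g : I -> R) :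
  \sum_i \sum_j f i * g j = (\sum_i f i) * (\sum_j g j).
Proof. rewrite mulr_suml; apply: eq_bigr => i _; by rewrite mulr_sumr. Qed.

Lemma keyid (R : realFieldType) (I : finType) (mu x : I -> R) :
  \sum_i mu i = 0 -> \sum_i mu i * x i = 0 ->
  \sum_i \sum_j mu i * mu j * (x i - x j) ^+ 2 = 0.
Proof.
move=> h1 h2.
have E : forall i j, mu i * mu j * (x i - x j) ^+ 2 =
   (mu i * x i ^+ 2) * mu j + mu i * (mu j * x j ^+ 2) - ((mu i * x i) * (mu j * x j)) *+ 2.
  move=> i j; rewrite sqrrB mulrDr mulrBr addrAC; congr (_ + _ - _).
  - by rewrite mulrAC.
  - by rewrite mulrA.
  - by rewrite mulrnAr; congr (_ *+ 2); rewrite -!mulrA; congr (_ * _); rewrite mulrCA.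
under eq_bigr => i _ do under eq_bigr => j _ do rewrite E.
under eq_bigr => i _ do rewrite sumrB big_split /=.
rewrite sumrB big_split /=.
have -> : \sum_i \sum_j mu i * x i * (mu j * x j) *+ 2 = 0.
  rewrite (eq_bigr (fun i => (\sum_j mu i * x i * (mu j * x j)) *+ 2)).
    by rewrite sumrMnl sum_prod h2 mulr0 mul0rn.
  by move=> i _; rewrite sumrMnl.
rewrite !sum_prod h1.
by rewrite mulr0 mul0r !addr0 subr0.
Qed.

Lemma sqnorm0 (R : realFieldType) n : sqnorm (0 : 'rV[R]_n) = 0.
Proof. by rewrite /sqnorm big1 // => k _; rewrite mxE expr0n. Qed.

Lemma Qlem (R : realFieldType) (r n : nat) (w : 'I_r -> 'rV[R]_n) (c : R)
  (hc : 0 < c) (hd : forall i j, i != j -> sqnorm (w i - w j) = c)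
  (mu : 'I_r -> R) :
  \sum_i mu i = 0 -> \sum_i mu i *: w i = 0 -> forall i, mu i = 0.
Proof.
move=> h1 h2.
have S0 : \sum_i \sum_j mu i * mu j * sqnorm (w i - w j) = 0.
  rewrite /sqnorm.
  under eq_bigr => i _ do under eq_bigr => j _ do rewrite mulr_sumr.
  under eq_bigr => i _ do rewrite exchange_big.
  rewrite exchange_big /=.
  apply: big1 => k _.
  transitivity (\sum_i \sum_j mu i * mu j * (w i 0 k - w j 0 k) ^+ 2).
    by apply: eq_bigr => i _; apply: eq_bigr => j _; rewrite !mxE.
  apply: keyid => //.
  have := congr1 (fun v : 'rV[R]_n => v 0 k) h2; rewrite summxE /= mxE.
  by under eq_bigr do rewrite mxE.
have T : forall i, \sum_j mu i * mu j * sqnorm (w i - w j) = - (c * mu i ^+ 2).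
  move=> i; rewrite (bigD1 i) //= subrr sqnorm0 mulr0 add0r.
  rewrite (eq_bigr (fun j => c * (mu i * mu j))); last first.
    by move=> j hj; rewrite hd 1?eq_sym // mulrC.
  rewrite -mulr_sumr.
  have : \sum_j mu i * mu j = 0 by rewrite -mulr_sumr h1 mulr0.
  rewrite (bigD1 i) //= => /eqP; rewrite addrC addr_eq0 => /eqP ->.
  by rewrite mulrN expr2.
have S1 : c * \sum_i mu i ^+ 2 = 0.
  apply/eqP; rewrite -oppr_eq0 mulr_sumr -sumrN; apply/eqP.
  transitivity (\sum_i \sum_j mu i * mu j * sqnorm (w i - w j)); last exact: S0.
  by apply: eq_bigr => i _; rewrite T.
have S2 : \sum_i mu i ^+ 2 = 0.
  by move/eqP: S1; rewrite mulf_eq0 gt_eqF //= => /eqP.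
move=> i; apply/eqP; rewrite -sqrf_eq0; apply/eqP.
by apply: (psumr_eq0P _ S2) => // j _; rewrite sqr_ge0.
Qed.

Lemma Slem (R : realFieldType) (r n : nat) (w : 'I_r -> 'rV[R]_n) (c : R)
  (hc : 0 < c) (hd : forall i j, i != j -> sqnorm (w i - w j) = c)
  (hs : \sum_i w i = 0) (lam : 'I_r -> R) :
  \sum_i lam i *: w i = 0 -> forall i j, lam i = lam j.
Proof.
move=> h i0.
have r0 : (r%:R : R) != 0 by rewrite pnatr_eq0 -lt0n (leq_ltn_trans _ (ltn_ord i0)).
set m := (\sum_i lam i) / r%:R.
have := Qlem hc hd (mu := fun i => lam i - m).
have e1 : \sum_i (lam i - m) = 0.
  by rewrite sumrB sumr_const card_ord -mulr_natr /m divfK // subrr.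
have e2 : \sum_i (lam i - m) *: w i = 0.
  under eq_bigr do rewrite scalerBl.
  by rewrite sumrB h -scaler_sumr hs scaler0 subrr.
move=> /(_ e1 e2) H j.
by move: (H i0) (H j) => /eqP; rewrite subr_eq0 => /eqP -> /eqP; rewrite subr_eq0 => /eqP ->.
Qed.

Lemma tensorE (R : realFieldType) m n (u : 'rV[R]_m) (v : 'rV[R]_n) k l :
  (u^T *m v) k l = u 0 k * v 0 l.
Proof. by rewrite !mxE big_ord1 !mxE. Qed.

Lemma tensorZ (R : realFieldType) m n (a : R) (u : 'rV[R]_m) (v : 'rV[R]_n) :
  tensor (a *: u) v = a *: tensor u v.
Proof.
rewrite /tensor -linearZ /=; congr mxvec; apply/matrixP => k l.
by rewrite !mxE !big_ord1 !mxE mulrA.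
Qed.

Lemma tensor_suml (R : realFieldType) m n (T : Type) (s : seq T) (c : T -> R)
  (g : T -> 'rV[R]_m) (v : 'rV[R]_n) :
  \sum_(p <- s) c p *: tensor (g p) v = tensor (\sum_(p <- s) c p *: g p) v.
Proof.
rewrite /tensor raddf_sum mulmx_suml raddf_sum /=; apply: eq_bigr => p _.
by rewrite -tensorZ.
Qed.

Lemma tensor_sumr (R : realFieldType) m n (I : finType) (u : 'rV[R]_m) (v : I -> 'rV[R]_n) :
  \sum_i tensor u (v i) = tensor u (\sum_i v i).
Proof. by rewrite /tensor mulmx_sumr raddf_sum. Qed.

Lemma tensor0 (R : realFieldType) m n (u : 'rV[R]_m) : tensor u (0 : 'rV[R]_n) = 0.
Proof. by rewrite /tensor mulmx0 linear0. Qed.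



Lemma lift1_sum (R : realFieldType) d (T : Type) (s : seq T) (c : T -> R) (g : T -> 'rV[R]_d) :
  \sum_(p <- s) c p *: lift1 (g p) = row_mx (\sum_(p <- s) c p *: g p) (const_mx (\sum_(p <- s) c p)).
Proof.
elim: s => [|a s IH]; first by rewrite !big_nil /lift1; apply/rowP=> k; rewrite !mxE; case: splitP => ? ?; rewrite !mxE.
rewrite !big_cons IH /lift1 scale_row_mx add_row_mx; congr row_mx.
by apply/rowP => k; rewrite !mxE mulr1.
Qed.

Lemma Klem (R : realFieldType) (d r n : nat) (w : 'I_r -> 'rV[R]_n) (c : R)
  (hc : 0 < c) (hd : forall i j, i != j -> sqnorm (w i - w j) = c)
  (hs : \sum_i w i = 0) (a : 'I_r -> 'rV[R]_d) :
  \sum_i tensor (a i) (w i) = 0 -> forall i j, a i = a j.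
Proof.
move=> h.
have hM : \sum_i (a i)^T *m w i = 0.
  by apply/eqP; rewrite -mxvec_eq0 raddf_sum; apply/eqP.
move=> i j; apply/rowP => k.
apply: (Slem hc hd hs (lam := fun i => a i 0 k)).
apply/rowP => l; have := congr1 (fun M : 'M_(d, n) => M k l) hM.
rewrite summxE !mxE => <-; rewrite summxE; apply: eq_bigr => t _.
by rewrite tensorE !mxE.
Qed.

Lemma Kconv (R : realFieldType) (d r n : nat) (w : 'I_r -> 'rV[R]_n)
  (hs : \sum_i w i = 0) (a : 'rV[R]_d) :
  \sum_i tensor a (w i) = 0.
Proof. by rewrite tensor_sumr hs tensor0. Qed.

Lemma w_inj (R : realFieldType) (r n : nat) (w : 'I_r -> 'rV[R]_n) (c : R)
  (hc : 0 < c) (hd : forall i j, i != j -> sqnorm (w i - w j) = c) : injective w.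
Proof.
move=> i j e; apply/eqP; apply: contraT => hij.
by move: (hd _ _ hij) hc; rewrite e subrr sqnorm0 => <-; rewrite ltxx.
Qed.

Lemma w_nz (R : realFieldType) (r n : nat) (hr : (2 <= r)%N) (w : 'I_r -> 'rV[R]_n) (c : R)
  (hc : 0 < c) (hd : forall i j, i != j -> sqnorm (w i - w j) = c)
  (hs : \sum_i w i = 0) i : w i != 0.
Proof.
apply/eqP => h0.
have [j hj] : exists j : 'I_r, j != i.
  case: (eqVneq (val i) 0%N) => hi.
    exists (Ordinal hr); apply/eqP => e; by move: hi; rewrite -e.
  exists (Ordinal (leq_trans (isT : (0 < 2)%N) hr)); apply/eqP => e.
  by move: hi; rewrite -e eqxx.
have := Slem hc hd hs (lam := fun k => (k == i)%:R).
have e : \sum_k (k == i)%:R *: w k = 0.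
  rewrite (bigD1 i) //= eqxx scale1r h0 add0r big1 // => k hk.
  by rewrite (negbTE hk) scale0r.
move=> /(_ e i j); rewrite eqxx (negbTE hj) => /eqP; by rewrite oner_eq0.
Qed.

Lemma clone_inj (R : realFieldType) (d r : nat) (hr : (2 <= r)%N) (w : 'I_r -> 'rV[R]_(r - 1)) (c : R)
  (hc : 0 < c) (hd : forall i j, i != j -> sqnorm (w i - w j) = c)
  (hs : \sum_i w i = 0) i j (x y : 'rV[R]_d) :
  clone w i x = clone w j y -> i = j /\ x = y.
Proof.
rewrite /clone /tensor => /(can_inj mxvecK) e.
have ew : w i = w j.
  apply/rowP => l; have := congr1 (fun M : 'M_(d + 1, r - 1) => M (rshift d ord0) l) e.
  by rewrite !tensorE /lift1 !row_mxEr !mxE !mul1r.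
have eij := w_inj hc hd ew; subst j; split => //.
have [l hl] : exists l, w i 0 l != 0.
  case: (pickP (fun l => w i 0 l != 0)) => [l hl | h]; first by exists l.
  have := w_nz hr hc hd hs i; case/negP; apply/eqP/rowP => l.
  by move: (h l) => /negbFE/eqP ->; rewrite mxE.
apply/rowP => k; have := congr1 (fun M : 'M_(d + 1, r - 1) => M (lshift 1 k) l) e.
by rewrite !tensorE /lift1 !row_mxEl => /(mulIf hl).
Qed.

Lemma sum_Phi (R : realFieldType) (d r : nat) (hr : (2 <= r)%N) (w : 'I_r -> 'rV[R]_(r - 1)) (c : R)
  (hc : 0 < c) (hd : forall i j, i != j -> sqnorm (w i - w j) = c)
  (hs : \sum_i w i = 0) (P : 'I_r -> seq 'rV[R]_d) (V : zmodType)
  (F : 'rV[R]_((d + 1) * (r - 1)) -> V) :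
  \sum_(q <- undup (Phi w P)) F q = \sum_i \sum_(p <- undup (P i)) F (clone w i p).
Proof.
have pe : perm_eq (undup (Phi w P)) [seq clone w i p | i <- enum 'I_r, p <- undup (P i)].
  apply: uniq_perm; first exact: undup_uniq.
    apply: allpairs_uniq_dep; [exact: enum_uniq | by move=> i _; exact: undup_uniq | ].
    move=> [i1 x1] [i2 x2] _ _ /= /(clone_inj hr hc hd hs) [e1 e2].
    by subst.
  move=> q; rewrite mem_undup /Phi.
  apply: (@mem_allpairs_dep _ _ _ (clone w) (enum 'I_r) P (enum 'I_r) (fun i => undup (P i))) => // i _ x.
  by rewrite mem_undup.
rewrite (perm_big _ pe) big_allpairs_dep /=.
by rewrite big_enum.
Qed.

Lemma ext_coef (R : realFieldType) (d r : nat) (hr : (2 <= r)%N) (w : 'I_r -> 'rV[R]_(r - 1)) (c : R)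
  (hc : 0 < c) (hd : forall i j, i != j -> sqnorm (w i - w j) = c)
  (hs : \sum_i w i = 0) (f : 'I_r -> 'rV[R]_d -> R) :
  exists C : 'rV[R]_((d + 1) * (r - 1)) -> R, forall i p, C (clone w i p) = f i p.
Proof.
pose C q := match excluded_middle_informative
                    (exists ip : 'I_r * 'rV[R]_d, q = clone w ip.1 ip.2) with
            | left H => let ip := proj1_sig (constructive_indefinite_description _ H) in f ip.1 ip.2
            | right _ => 0 end.
exists C => i p; rewrite /C.
case: excluded_middle_informative => [H | H]; last first.
  by exfalso; apply: H; exists (i, p).
case: (constructive_indefinite_description _ H) => [[j q]] /= e.
by have [-> ->] := clone_inj hr hc hd hs e.
Qed.

Lemma mem_clone (R : realFieldType) (d r : nat) (w : 'I_r -> 'rV[R]_(r - 1))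
  (P : 'I_r -> seq 'rV[R]_d) i p : p \in P i -> clone w i p \in Phi w P.
Proof.
move=> hp; apply/flatten_mapP; exists i; first by rewrite mem_enum.
exact: map_f.
Qed.

Lemma mem_PhiP (R : realFieldType) (d r : nat) (w : 'I_r -> 'rV[R]_(r - 1))
  (P : 'I_r -> seq 'rV[R]_d) q : q \in Phi w P -> exists i, exists2 p, p \in P i & q = clone w i p.
Proof.
by case/flatten_mapP => i _ /mapP [p hp ->]; exists i, p.
Qed.

Lemma IDlem (R : realFieldType) (d r : nat) (hr : (2 <= r)%N) (w : 'I_r -> 'rV[R]_(r - 1)) (c : R)
  (hc : 0 < c) (hd : forall i j, i != j -> sqnorm (w i - w j) = c)
  (hs : \sum_i w i = 0) (P : 'I_r -> seq 'rV[R]_d) (C : 'rV[R]_((d + 1) * (r - 1)) -> R)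
  (f : 'I_r -> 'rV[R]_d -> R) (hf : forall i p, C (clone w i p) = f i p) :
  \sum_(q <- undup (Phi w P)) C q = \sum_i \sum_(p <- undup (P i)) f i p /\
  \sum_(q <- undup (Phi w P)) C q *: q =
    \sum_i tensor (row_mx (\sum_(p <- undup (P i)) f i p *: p)
                          (const_mx (\sum_(p <- undup (P i)) f i p))) (w i).
Proof.
split.
  rewrite (sum_Phi hr hc hd hs); apply: eq_bigr => i _; apply: eq_bigr => p _.
  exact: hf.
rewrite (sum_Phi hr hc hd hs); apply: eq_bigr => i _.
rewrite -lift1_sum -tensor_suml; apply: eq_bigr => p _.
by rewrite hf.
Qed.

Lemma split_eq (R : realFieldType) d (A B : 'rV[R]_d) (a b : R) :
  row_mx A (const_mx a) = row_mx B (const_mx b) :> 'rV_(d + 1) -> A = B /\ a = b.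
Proof.
move=> /eq_row_mx [-> e]; split => //.
by have := congr1 (fun M : 'rV[R]_1 => M 0 0) e; rewrite !mxE.
Qed.

Lemma row0const (R : realFieldType) d :
  row_mx (0 : 'rV[R]_d) (const_mx (0 : R)) = 0 :> 'rV_(d + 1).
Proof. by apply/rowP => k; rewrite !mxE; case: splitP => ? ?; rewrite !mxE. Qed.

Theorem lemma4 (R : realFieldType) (d r : nat) (hr : (2 <= r)%N)
  (w : 'I_r -> 'rV[R]_(r - 1)) (hw : regular_simplex_centered w)
  (P : 'I_r -> seq 'rV[R]_d)
  (hdisj : forall i j : 'I_r, i != j -> forall x, x \in P i -> x \notin P j) :
  (in_aff (Phi w P) 0 <-> exists x : 'rV[R]_d, forall i, in_aff (P i) x) /\
  (aff_dep (Phi w P) <->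
     (exists i, aff_dep (P i)) \/
     exists2 v : 'rV[R]_d, v != 0 & forall i, in_linaff (P i) v).
Proof.
case: hw => hs [c hc hd].
have r0 : (r%:R : R) != 0 by rewrite pnatr_eq0 -lt0n (leq_trans _ hr).
pose i0 : 'I_r := Ordinal (leq_trans (isT : (0 < 2)%N) hr).
have common : forall C : 'rV[R]_((d + 1) * (r - 1)) -> R,
    \sum_(q <- undup (Phi w P)) C q *: q = 0 ->
    [/\ forall i j, \sum_(p <- undup (P i)) C (clone w i p) *: p =
                    \sum_(p <- undup (P j)) C (clone w j p) *: p,
        forall i j, \sum_(p <- undup (P i)) C (clone w i p) =
                    \sum_(p <- undup (P j)) C (clone w j p) &
        \sum_(q <- undup (Phi w P)) C q = \sum_i \sum_(p <- undup (P i)) C (clone w i p)].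
  move=> C hC0.
  have [e1 e2] := IDlem hr hc hd hs P (f := fun i p => C (clone w i p)) (fun i p => erefl).
  have hK := Klem hc hd hs (etrans (esym e2) hC0).
  split => // i j; by have [] := split_eq (hK i j).
have sconst : forall (s : 'I_r -> R) (a : R), (forall i j, s i = s j) ->
    \sum_i s i = a -> forall i, s i = a / r%:R.
  move=> s a hij hsum i.
  have : \sum_i s i = s i *+ r.
    by rewrite (eq_bigr (fun _ => s i)) ?sumr_const ?card_ord // => j _; rewrite (hij j i).
  by rewrite hsum => ->; rewrite -(mulr_natr (s i)) mulfK.
split; split.
- case => C [hC1 hC0].
  have [hX hS e1] := common C (esym hC0).
  have hsi := sconst _ _ (hS) (etrans (esym e1) hC1).
  exists (r%:R *: \sum_(p <- undup (P i0)) C (clone w i0 p) *: p) => i.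
  exists (fun p => r%:R * C (clone w i p)); split.
    by rewrite -mulr_sumr hsi mul1r mulfV.
  rewrite (hX i0 i) scaler_sumr; apply: eq_bigr => p _; by rewrite scalerA.
- case => x hx.
  have [cf hcf] := fin_all_exists hx.
  have [C hC] := ext_coef hr hc hd hs (fun i p => cf i p / r%:R).
  have [e1 e2] := IDlem hr hc hd hs P hC.
  exists C; split.
    rewrite e1 (eq_bigr (fun _ => r%:R^-1)); last first.
      by move=> i _; rewrite -mulr_suml (proj1 (hcf i)) mul1r.
    by rewrite sumr_const card_ord -(mulr_natr (r%:R^-1)) mulVf.
  rewrite e2 (eq_bigr (fun i => tensor (row_mx (r%:R^-1 *: x) (const_mx r%:R^-1)) (w i))) ?Kconv //.
  move=> i _; congr tensor; congr row_mx.
    rewrite (proj2 (hcf i)) scaler_sumr; apply: eq_bigr => p _.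
    by rewrite scalerA mulrC.
  by rewrite -mulr_suml (proj1 (hcf i)) mul1r.
- case => C [hC1 hC0 [q0 hq0 hCq]].
  have [hX hS e1] := common C hC0.
  have hsi := sconst _ _ (hS) (etrans (esym e1) hC1).
  case: (eqVneq (\sum_(p <- undup (P i0)) C (clone w i0 p) *: p) 0) => hv.
    left; have [i [p hp e]] := mem_PhiP hq0.
    exists i, (fun p => C (clone w i p)); split.
    + by rewrite hsi mul0r.
    + by rewrite (hX i i0).
    + by exists p => //; rewrite -e.
  right; exists (\sum_(p <- undup (P i0)) C (clone w i0 p) *: p) => // i.
  exists (fun p => C (clone w i p)); split.
    by rewrite hsi mul0r.
  by rewrite (hX i0 i).
- case => [[i [cd [h1 h2 [p hp hcp]]]] | [v hv hl]].
    have [C hC] := ext_coef hr hc hd hs (fun j p => if j == i then cd p else 0).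
    have [e1 e2] := IDlem hr hc hd hs P hC.
    exists C; split.
    + rewrite e1; apply: big1 => j _; case: (eqVneq j i) => [->|hne].
        exact: h1.
      by rewrite big1.
    + rewrite e2 (eq_bigr (fun j => tensor 0 (w j))) ?Kconv //.
      move=> j _; case: (eqVneq j i) => [->|hne].
        by rewrite h1 h2 row0const.
      rewrite !big1 ?row0const // => p' _.
      by rewrite scale0r.
    + by exists (clone w i p); [exact: mem_clone | rewrite hC eqxx].
  have [cl hcl] := fin_all_exists hl.
  have [C hC] := ext_coef hr hc hd hs cl.
  have [e1 e2] := IDlem hr hc hd hs P hC.
  exists C; split.
  + by rewrite e1; apply: big1 => j _; rewrite (proj1 (hcl j)).
  + rewrite e2 (eq_bigr (fun j => tensor (row_mx v (const_mx 0)) (w j))) ?Kconv //.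
    by move=> j _; rewrite (proj1 (hcl j)) -(proj2 (hcl j)).
  + case: (boolP (has (fun p => cl i0 p != 0) (undup (P i0)))) => [/hasP [p hp hcp] | /hasPn h].
      by exists (clone w i0 p); [apply: mem_clone; rewrite -mem_undup | rewrite hC].
    move: hv; rewrite (proj2 (hcl i0)) big1_seq ?eqxx // => p /andP [_ hp].
    by move: (h p hp) => /negbNE/eqP ->; rewrite scale0r.
Qed.
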